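(* Let $\mathcal Z$ be a finite zero-set, let $R_{a,b}\subseteq\mathcal Z$ with $a,b\ge1$, and let $Y$ be a nonempty Young diagram with $Y\subseteq R_{a-1,b-1}$. Then $$\gamma(\mathcal Z)\ge\frac12\min_{(k,\ell)\in\partial_oY}\Big(kb+\ell a-k\ell+\gamma(\mathcal Z^{\downarrow\ell})+\gamma(\mathcal Z^{\leftarrow k})\Big).$$
   Context: $\mathbb Z_+=\{0,1,2,\dots\}$, $R_{a,b}=([0,a-1]\times[0,b-1])\cap\mathbb Z_+^2$; a zero-set is a union of such rectangles (a finite one is a Young diagram). $\mathrm{row}(x,A),\mathrm{col}(x,A)$ count points of $A$ on the horizontal/vertical line through $x$; $\mathcal T(A)=A\cup\{x\notin A:(\mathrm{row}(x,A),\mathrm{col}(x,A))\notin\mathcal Z\}$; $A$ spans if $\bigcup_t\mathcal T^t(A)=\mathbb Z_+^2$; $\gamma(\mathcal Z)$ is the minimal size of a finite spanning set (with $\gamma(\emptyset)=0$). For integers $k\ge0$: $\mathcal Z^{\downarrow k}=\{(u,v-k):(u,v)\in\mathcal Z,v\ge k\}$ and $\mathcal Z^{\leftarrow k}=\{(u-k,v):(u,v)\in\mathcal Z,u\ge k\}$. The outer boundary is $\partial_oY=\{(u,v)\in\mathbb Z_+^2\setminus Y:(u-1,v)\in Y\text{ or }(u,v-1)\in Y\}$. *)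

(* Defs.v *)
From mathcomp Require Import all_boot.
From Stdlib Require Import ClassicalEpsilon.
Set Implicit Arguments. Unset Strict Implicit. Unset Printing Implicit Defensive.

Definition pt := (nat * nat)%type.
Definition pset := pt -> Prop.

Definition rect (a b : nat) : pset := fun p => p.1 < a /\ p.2 < b.

Definition included (A B : pset) : Prop := forall p, A p -> B p.

(* zero-set: a union of rectangles R_{a,b}, i.e. every point of Z lies in
   some rectangle contained in Z (and rectangles contained in Z are in Z). *)
Definition zero_set (Z : pset) : Prop :=
  forall p, Z p <-> exists a b, included (rect a b) Z /\ rect a b p.

Definition finite_set (A : pset) : Prop := exists s : seq pt, forall p, A p -> p \in s.

Definition young (Y : pset) : Prop := zero_set Y /\ finite_set Y.

Definition card_is (P : pset) (n : nat) : Prop :=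
  exists s : seq pt, uniq s /\ size s = n /\ forall p, P p <-> p \in s.

Definition row_pts (A : pset) (x : pt) : pset := fun y => A y /\ y.2 = x.2.
Definition col_pts (A : pset) (x : pt) : pset := fun y => A y /\ y.1 = x.1.

(* (row(x,A), col(x,A)) \in Z ; an infinite count is never in Z *)
Definition counts_in (Z A : pset) (x : pt) : Prop :=
  exists u v, Z (u, v) /\ card_is (row_pts A x) u /\ card_is (col_pts A x) v.

Definition T (Z A : pset) : pset :=
  fun x => A x \/ (~ A x /\ ~ counts_in Z A x).

Fixpoint Titer (Z : pset) (t : nat) (A : pset) : pset :=
  match t with 0 => A | t'.+1 => T Z (Titer Z t' A) end.

Definition spans (Z A : pset) : Prop := forall x, exists t, Titer Z t A x.

Definition set_of (s : seq pt) : pset := fun p => p \in s.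

Definition is_gamma (Z : pset) (g : nat) : Prop :=
  (exists s : seq pt, uniq s /\ size s = g /\ spans Z (set_of s)) /\
  (forall s : seq pt, uniq s -> spans Z (set_of s) -> g <= size s).

(* gamma(Z): the (unique) such g; junk value only if no finite spanning set exists *)
Definition gamma (Z : pset) : nat := epsilon (inhabits 0) (is_gamma Z).

Definition shift_down (Z : pset) (k : nat) : pset := fun p => Z (p.1, p.2 + k).
Definition shift_left (Z : pset) (k : nat) : pset := fun p => Z (p.1 + k, p.2).

Definition outer_boundary (Y : pset) : pset :=
  fun p => ~ Y p /\ ((0 < p.1 /\ Y (p.1.-1, p.2)) \/ (0 < p.2 /\ Y (p.1, p.2.-1))).

(* Main.v *)
Require Import Defs.
From mathcomp Require Import all_boot zify.
From Stdlib Require Import ClassicalEpsilon FunctionalExtensionality PropExtensionality Classical.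
Set Implicit Arguments. Unset Strict Implicit. Unset Printing Implicit Defensive.

Definition downclosed (Z : pset) : Prop :=
  forall u v u' v', Z (u, v) -> u' <= u -> v' <= v -> Z (u', v').

Lemma zero_down Z : zero_set Z -> downclosed Z.
Proof.
move=> HZ u v u' v' Huv Hu Hv.
have [a [b [Hinc [/= H1 H2]]]] := (proj1 (HZ (u, v)) Huv).
apply: Hinc; split => /=; lia.
Qed.

Definition decb (P : Prop) : bool := if excluded_middle_informative P then true else false.
Lemma decbP (P : Prop) : decb P <-> P.
Proof. rewrite /decb; case: excluded_middle_informative => //. Qed.

Lemma card_sub (P : pset) (s : seq pt) :
  (forall p, P p -> p \in s) -> exists n, card_is P n /\ n <= size s.
Proof.
move=> Hs; exists (size (undup [seq p <- s | decb (P p)])); split.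
  exists (undup [seq p <- s | decb (P p)]); split; first exact: undup_uniq.
  split=> // p; rewrite mem_undup mem_filter; split.
    by move=> Hp; rewrite (Hs _ Hp) andbT; apply/decbP.
  by case/andP=> /decbP.
apply: leq_trans (size_undup _) _; rewrite size_filter; exact: count_size.
Qed.

Lemma card_ge (P : pset) n (s : seq pt) :
  card_is P n -> uniq s -> (forall p, p \in s -> P p) -> size s <= n.
Proof.
move=> [s' [Hu [<- HP]]] Hs Hin; apply: uniq_leq_size => // p /Hin /HP //.
Qed.

Lemma card_ext (P P' : pset) n : (forall y, P y <-> P' y) -> card_is P n -> card_is P' n.
Proof.
move=> E [s [Hu [Hs HP]]]; exists s; split=> //; split=> // p; rewrite -E; exact: HP.
Qed.

Lemma gamma_spec Z (s : seq pt) : uniq s -> spans Z (Defs.set_of s) -> is_gamma Z (gamma Z).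
Proof.
move=> Hu Hs; apply: epsilon_spec.
suff: forall n, (exists s, uniq s /\ size s <= n /\ spans Z (Defs.set_of s)) -> exists g, is_gamma Z g.
  by apply; exists s.
elim=> [|n IH].
  move=> [s0 [H1 [H2 H3]]]; exists 0; split=> //; exists s0; split=> //; split=> //.
  by apply/eqP; rewrite -leqn0.
move=> [s0 [H1 [H2 H3]]].
case: (classic (exists s, uniq s /\ size s <= n /\ spans Z (Defs.set_of s))) => [|Hn]; first exact: IH.
exists (size s0); split; first by exists s0.
move=> s' Hu' Hs'; case: (leqP (size s0) (size s')) => // Hlt.
exfalso; apply: Hn; exists s'; split=> //; split=> //.
by rewrite -ltnS; exact: (leq_trans Hlt H2).
Qed.

Lemma gamma_le Z (s : seq pt) : uniq s -> spans Z (Defs.set_of s) -> gamma Z <= size s.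
Proof. move=> Hu Hs; have [_ H] := gamma_spec Hu Hs; exact: H. Qed.

Definition phi (r y : nat) := if y < r then y else y.-1.
Definition psi (r w : nat) := if w < r then w else w.+1.
Lemma psi_neq r w : psi r w != r.
Proof. rewrite /psi; case: ltnP => H; apply/eqP; lia. Qed.
Lemma phi_psi r w : phi r (psi r w) = w.
Proof. rewrite /phi /psi; case: (ltnP w r) => H; case: ltnP => H2 //; lia. Qed.
Lemma psi_phi r y : y != r -> psi r (phi r y) = y.
Proof. move=> /eqP Hy; rewrite /phi /psi; case: (ltnP y r) => H; case: ltnP => H2 //; lia. Qed.

Definition delrow (r : nat) (A : seq pt) : seq pt :=
  [seq (p.1, phi r p.2) | p <- A & p.2 != r].

Lemma delrow_uniq r A : uniq A -> uniq (delrow r A).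
Proof.
move=> Hu; rewrite /delrow map_inj_in_uniq ?filter_uniq //.
move=> [x1 y1] [x2 y2]; rewrite !mem_filter /= => /andP[H1 _] /andP[H2 _] [-> E].
by rewrite -(psi_phi H1) -(psi_phi H2) E.
Qed.

Lemma del1 Z A r : downclosed Z -> spans Z (Defs.set_of A) ->
  spans (shift_down Z 1) (Defs.set_of (delrow r A)).
Proof.
move=> HZ Hs.
suff key : forall t u w, Titer Z t (Defs.set_of A) (u, psi r w) ->
                         Titer (shift_down Z 1) t (Defs.set_of (delrow r A)) (u, w).
  move=> [u w]; have [t Ht] := Hs (u, psi r w); exists t; exact: key.
elim=> [|t IH] u w /=.
  move=> H; rewrite /Defs.set_of /delrow; apply/mapP; exists (u, psi r w).
    by rewrite mem_filter psi_neq.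
  by rewrite /= phi_psi.
case=> [HA|[HnA Hnc]]; first by left; apply: IH.
case: (classic (Titer (shift_down Z 1) t (Defs.set_of (delrow r A)) (u, w))) => HB; first by left.
right; split=> // Hc; apply: Hnc.
move: Hc => [u' [v' [HZ' [[s1 [_ [Hs1 E1]]] [s2 [_ [Hs2 E2]]]]]]].
have [n1 [C1 L1]] : exists n, card_is (row_pts (Titer Z t (Defs.set_of A)) (u, psi r w)) n /\ n <= size s1.
  have := @card_sub (row_pts (Titer Z t (Defs.set_of A)) (u, psi r w)) [seq (p.1, psi r p.2) | p <- s1].
  rewrite size_map; apply=> -[x y] [Hp /= Hy]; subst y.
  apply/mapP; exists (x, w) => //; apply/E1; split=> //; exact: IH.
have [n2 [C2 L2]] : exists n, card_is (col_pts (Titer Z t (Defs.set_of A)) (u, psi r w)) n /\ n <= (size s2).+1.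
  have := @card_sub (col_pts (Titer Z t (Defs.set_of A)) (u, psi r w)) ((u, r) :: [seq (p.1, psi r p.2) | p <- s2]).
  rewrite /= size_map; apply=> -[x y] [Hp /= Hx]; subst x.
  rewrite in_cons; case: (eqVneq y r) => [->|Hyr]; first by rewrite eqxx.
  apply/orP; right; apply/mapP; exists (u, phi r y); last by rewrite /= psi_phi.
  apply/E2; split=> //; apply: IH; by rewrite psi_phi.
exists n1, n2; split=> //; apply: (HZ _ _ _ _ HZ').
  by rewrite /= -Hs1.
by rewrite /= addn1 -Hs2.
Qed.

Lemma shift_down0 Z : shift_down Z 0 = Z.
Proof. apply: functional_extensionality => -[x y]; by rewrite /shift_down /= addn0. Qed.

Lemma shift_downS Z n : shift_down (shift_down Z 1) n = shift_down Z n.+1.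
Proof. apply: functional_extensionality => -[x y]; by rewrite /shift_down /= addn1 addnS. Qed.

Lemma down_shift Z n : downclosed Z -> downclosed (shift_down Z n).
Proof. move=> HZ u v u' v' H Hu Hv; apply: (HZ _ _ _ _ H) => //=; lia. Qed.

Lemma phi_mem r R y : y != r -> r \notin R -> (phi r y \in map (phi r) R) = (y \in R).
Proof.
move=> Hy HR; apply/mapP/idP => [[z Hz E]|Hin]; last by exists y.
have Hz' : z != r by apply/eqP=> Ez; move: HR; rewrite -Ez Hz.
by rewrite -(psi_phi Hy) E psi_phi.
Qed.

Lemma delR_n n : forall (R : seq nat) Z (A : seq pt), size R = n -> downclosed Z -> uniq R -> uniq A ->
  spans Z (Defs.set_of A) ->
  exists B : seq pt, uniq B /\ size B = count (fun p : pt => p.2 \notin R) A /\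
    spans (shift_down Z (size R)) (Defs.set_of B).
Proof.
elim: n => [|n IH] [|r R] Z A //= Hn HZ HR HA Hs.
  exists A; split=> //; split; last by rewrite shift_down0.
  by rewrite (eq_count (a2 := predT)) ?count_predT.
case: Hn => Hn; move: HR => /= /andP[HrR HR].
have := IH (map (phi r) R) (shift_down Z 1) (delrow r A).
rewrite size_map => /(_ Hn (@down_shift Z 1 HZ)) /(_ _ (delrow_uniq r HA) (@del1 Z A r HZ Hs)) [].
  rewrite map_inj_in_uniq // => y1 y2 H1 H2 E.
  have H1' : y1 != r by apply/eqP=> Ez; move: HrR; rewrite -Ez H1.
  have H2' : y2 != r by apply/eqP=> Ez; move: HrR; rewrite -Ez H2.
  by rewrite -(psi_phi H1') E psi_phi.
move=> B [HB [HsB HspB]]; exists B; split=> //; split.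
  rewrite HsB /delrow count_map count_filter; apply: eq_count => -[x y] /=.
  rewrite in_cons; case: (eqVneq y r) => [->|Hyr] /=; first by rewrite andbF.
  by rewrite phi_mem // andbT.
by rewrite -shift_downS.
Qed.

Lemma delR (R : seq nat) Z (A : seq pt) : downclosed Z -> uniq R -> uniq A ->
  spans Z (Defs.set_of A) ->
  exists B : seq pt, uniq B /\ size B = count (fun p : pt => p.2 \notin R) A /\
    spans (shift_down Z (size R)) (Defs.set_of B).
Proof. exact: delR_n. Qed.

Definition sw (p : pt) : pt := (p.2, p.1).
Definition trZ (Z : pset) : pset := fun p => Z (sw p).
Lemma swK p : sw (sw p) = p. Proof. by case: p. Qed.
Lemma sw_inj : injective sw. Proof. exact: can_inj swK. Qed.

Lemma card_sw (P : pset) n : card_is P n -> card_is (fun y => P (sw y)) n.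
Proof.
move=> [s [Hu [Hs HP]]]; exists (map sw s); split; first by rewrite map_inj_uniq //; exact: sw_inj.
split; first by rewrite size_map.
move=> y; rewrite HP -{2}(swK y) mem_map //; exact: sw_inj.
Qed.

Lemma counts_sw Z (Q : pset) x :
  counts_in (trZ Z) (fun p => Q (sw p)) x <-> counts_in Z Q (sw x).
Proof.
split=> [[u [v [H1 [H2 H3]]]]|[u [v [H1 [H2 H3]]]]].
  exists v, u; split=> //; split.
    apply: card_ext (card_sw H3) => y; rewrite /col_pts /row_pts swK; by case: y.
  apply: card_ext (card_sw H2) => y; rewrite /col_pts /row_pts swK; by case: y.
exists v, u; split=> //; split.
  apply: card_ext (card_sw H3) => y; rewrite /col_pts /row_pts; by case: y.
apply: card_ext (card_sw H2) => y; rewrite /col_pts /row_pts; by case: y.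
Qed.

Lemma Titer_sw Z (P : pset) t :
  Titer (trZ Z) t (fun p => P (sw p)) = fun p => Titer Z t P (sw p).
Proof.
elim: t => [//|t IH] /=; rewrite IH; apply: functional_extensionality => x.
apply: propositional_extensionality; rewrite /Defs.T counts_sw; tauto.
Qed.

Lemma spans_sw Z (A : seq pt) : spans Z (Defs.set_of A) -> spans (trZ Z) (Defs.set_of (map sw A)).
Proof.
move=> Hs x.
have -> : Defs.set_of (map sw A) = fun p => Defs.set_of A (sw p).
  apply: functional_extensionality => p; apply: propositional_extensionality.
  rewrite /Defs.set_of -{1}(swK p) mem_map //; exact: sw_inj.
have [t Ht] := Hs (sw x); exists t; by rewrite Titer_sw.
Qed.

Lemma down_tr Z : downclosed Z -> downclosed (trZ Z).
Proof. move=> HZ u v u' v' H Hu Hv; exact: (HZ _ _ _ _ H). Qed.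

Definition line := (bool * nat)%type.
Definition rowsc (ch : seq line) : seq nat := [seq x.2 | x <- ch & x.1].
Definition colsc (ch : seq line) : seq nat := [seq x.2 | x <- ch & ~~ x.1].
Definition rowseq (A : seq pt) ch r : seq pt :=
  undup ([seq p <- A | p.2 == r] ++ [seq (c, r) | c <- colsc ch]).
Definition colseq (A : seq pt) ch c : seq pt :=
  undup ([seq p <- A | p.1 == c] ++ [seq (c, q) | q <- rowsc ch]).

Fixpoint valid (A : seq pt) (a b : nat) (ch : seq line) : Prop :=
  match ch with
  | [::] => True
  | x :: ch' => valid A a b ch' /\
     (if x.1 then x.2 \notin rowsc ch' /\ a <= size (rowseq A ch' x.2)
      else x.2 \notin colsc ch' /\ b <= size (colseq A ch' x.2))
  end.

Lemma count_or (T0 : Type) (P Q : pred T0) s :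
  count (fun x => P x || Q x) s = count P s + count (fun x => Q x && ~~ P x) s.
Proof. elim: s => //= x s ->; case: (P x); case: (Q x) => /=; lia. Qed.

Lemma count_split (T0 : Type) (P : pred T0) s :
  count P s + count (fun x => ~~ P x) s = size s.
Proof. elim: s => //= x s <-; case: (P x) => /=; lia. Qed.

Lemma rowseq_le A ch r :
  size (rowseq A ch r) <= count (fun p : pt => (p.2 == r) && (p.1 \notin colsc ch)) A + size (colsc ch).
Proof.
apply: (@leq_trans (size ([seq p <- A | (p.2 == r) && (p.1 \notin colsc ch)] ++ [seq (c, r) | c <- colsc ch]))); last by rewrite size_cat size_filter size_map.
apply: uniq_leq_size; first exact: undup_uniq.
move=> p; rewrite mem_undup !mem_cat => /orP[|->]; last by rewrite orbT.
rewrite !mem_filter => /andP[/eqP Hr HA]; case Hc: (p.1 \in colsc ch).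
  by apply/orP; right; apply/mapP; exists p.1 => //; rewrite -Hr; case: p {Hr HA Hc}.
by rewrite Hr eqxx HA.
Qed.

Lemma colseq_le A ch c :
  size (colseq A ch c) <= count (fun p : pt => (p.1 == c) && (p.2 \notin rowsc ch)) A + size (rowsc ch).
Proof.
apply: (@leq_trans (size ([seq p <- A | (p.1 == c) && (p.2 \notin rowsc ch)] ++ [seq (c, q) | q <- rowsc ch]))); last by rewrite size_cat size_filter size_map.
apply: uniq_leq_size; first exact: undup_uniq.
move=> p; rewrite mem_undup !mem_cat => /orP[|->]; last by rewrite orbT.
rewrite !mem_filter => /andP[/eqP Hr HA]; case Hc: (p.2 \in rowsc ch).
  by apply/orP; right; apply/mapP; exists p.2 => //; rewrite -Hr; case: p {Hr HA Hc}.
by rewrite Hr eqxx HA.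
Qed.

Lemma valid_count A a b ch : valid A a b ch ->
  size (colsc ch) * b + size (rowsc ch) * a <=
  count (fun p : pt => (p.2 \in rowsc ch) || (p.1 \in colsc ch)) A + size (colsc ch) * size (rowsc ch).
Proof.
elim: ch => [|[[] n] ch IH] //= [Hv [Hn Hs]].
  rewrite /rowsc /colsc /= -/(rowsc ch) -/(colsc ch).
  have E : count (fun p : pt => (p.2 \in n :: rowsc ch) || (p.1 \in colsc ch)) A =
     count (fun p : pt => (p.2 \in rowsc ch) || (p.1 \in colsc ch)) A +
     count (fun p : pt => (p.2 == n) && (p.1 \notin colsc ch)) A.
    rewrite (@eq_count _ _ (fun p : pt => ((p.2 \in rowsc ch) || (p.1 \in colsc ch)) || (p.2 == n))); last first.
      by move=> p /=; rewrite in_cons; case: (p.2 == n); case: (p.2 \in rowsc ch); case: (p.1 \in colsc ch).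
    rewrite count_or; congr (_ + _); apply: eq_count => p /=.
    case: (eqVneq p.2 n) => [E|] //=.
    by rewrite E (negbTE Hn).
  rewrite E; have := IH Hv; have := rowseq_le A ch n; rewrite mulnS mulSn /=; nia.
rewrite /rowsc /colsc /= -/(rowsc ch) -/(colsc ch).
have E : count (fun p : pt => (p.2 \in rowsc ch) || (p.1 \in n :: colsc ch)) A =
   count (fun p : pt => (p.2 \in rowsc ch) || (p.1 \in colsc ch)) A +
   count (fun p : pt => (p.1 == n) && (p.2 \notin rowsc ch)) A.
  rewrite (@eq_count _ _ (fun p : pt => ((p.2 \in rowsc ch) || (p.1 \in colsc ch)) || (p.1 == n))); last first.
    by move=> p /=; rewrite in_cons; case: (p.1 == n); case: (p.2 \in rowsc ch); case: (p.1 \in colsc ch).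
  rewrite count_or; congr (_ + _); apply: eq_count => p /=.
  case: (eqVneq p.1 n) => [E|] //=.
  by rewrite E (negbTE Hn) orbF.
rewrite E; have := IH Hv; have := colseq_le A ch n; rewrite mulSn /=; nia.
Qed.

Lemma valid_uniq A a b ch : valid A a b ch -> uniq (rowsc ch) /\ uniq (colsc ch).
Proof.
elim: ch => [|[[] n] ch IH] //= [Hv [Hn _]]; rewrite /rowsc /colsc /= -/(rowsc ch) -/(colsc ch) /=;
  have [H1 H2] := IH Hv; by rewrite Hn H1 H2.
Qed.

Lemma size_ch ch : size ch = size (rowsc ch) + size (colsc ch).
Proof.
elim: ch => [|[[] n] ch IH] //=; rewrite /rowsc /colsc /= -/(rowsc ch) -/(colsc ch) /= IH; lia.
Qed.

Lemma young00 Y : young Y -> (exists p, Y p) -> Y (0, 0).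
Proof.
move=> [HY _] [p Hp]; have [a [b [Hinc [H1 H2]]]] := proj1 (HY p) Hp.
apply: Hinc; split => /=; lia.
Qed.

Lemma chains_in_Y A a b Y : young Y -> (exists p, Y p) ->
  (forall ch, valid A a b ch -> ~ outer_boundary Y (size (colsc ch), size (rowsc ch))) ->
  forall ch, valid A a b ch -> Y (size (colsc ch), size (rowsc ch)).
Proof.
move=> HY Hne Hno; elim=> [|[[] n] ch IH] /=; first by move=> _; exact: young00.
  move=> Hv; have HYc := IH (proj1 Hv).
  rewrite /rowsc /colsc /= -/(rowsc ch) -/(colsc ch) /=.
  case: (classic (Y (size (colsc ch), (size (rowsc ch)).+1))) => // HnY.
  exfalso; apply: (Hno ((true, n) :: ch) Hv); rewrite /rowsc /colsc /= -/(rowsc ch) -/(colsc ch) /=.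
  split=> //; right; split=> //.
move=> Hv; have HYc := IH (proj1 Hv).
rewrite /rowsc /colsc /= -/(rowsc ch) -/(colsc ch) /=.
case: (classic (Y ((size (colsc ch)).+1, size (rowsc ch)))) => // HnY.
exfalso; apply: (Hno ((false, n) :: ch) Hv); rewrite /rowsc /colsc /= -/(rowsc ch) -/(colsc ch) /=.
split=> //; left; split=> //.
Qed.

Lemma max_chain A a b N : (forall ch, valid A a b ch -> size ch <= N) ->
  exists ch, valid A a b ch /\ forall x, ~ valid A a b (x :: ch).
Proof.
move=> HN.
suff: forall n ch, valid A a b ch -> N - size ch <= n ->
  exists ch, valid A a b ch /\ forall x, ~ valid A a b (x :: ch).
  by move=> /(_ N [::] I); apply; lia.
elim=> [|n IH] ch Hv Hn.
  exists ch; split=> // x Hx; have := HN _ Hx; rewrite /=; lia.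
case: (classic (exists x, valid A a b (x :: ch))) => [[x Hx]|Hno].
  apply: (IH _ Hx); have := HN _ Hx; rewrite /=; lia.
exists ch; split=> // x Hx; apply: Hno; by exists x.
Qed.

Lemma in_sumn (s : seq nat) x : x \in s -> x <= sumn s.
Proof. elim: s => //= y s IH; rewrite in_cons => /orP[/eqP ->|/IH]; lia. Qed.

Lemma not_span_maximal Z A a b ch : included (rect a b) Z -> valid A a b ch ->
  (forall x, ~ valid A a b (x :: ch)) -> ~ spans Z (Defs.set_of A).
Proof.
move=> Hrect Hv Hmax Hs.
pose O (p : pt) := (p \in A) || (p.2 \in rowsc ch) || (p.1 \in colsc ch).
have clos : forall t p, Titer Z t (Defs.set_of A) p -> O p.
  elim=> [|t IH] p /=; first by rewrite /O => ->.
  case=> [/IH //|[HnA Hnc]]; case HO: (O p) => //; exfalso; apply: Hnc.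
  move: HO; rewrite /O => /norP[/norP[HpA Hr] Hc].
  have Hsub1 : forall q, row_pts (Titer Z t (Defs.set_of A)) p q -> q \in rowseq A ch p.2.
  { move=> q [/IH Hq E]; rewrite /rowseq mem_undup mem_cat.
      move: Hq; rewrite /O => /orP[/orP[HqA|Hqr]|Hqc].
      - by rewrite mem_filter HqA E eqxx.
      - by move: Hr; rewrite -E Hqr.
      - by apply/orP; right; apply/mapP; exists q.1 => //; rewrite -E; case: q {E Hqc}. }
  have [n1 [C1 L1]] := card_sub Hsub1.
  have Hsub2 : forall q, col_pts (Titer Z t (Defs.set_of A)) p q -> q \in colseq A ch p.1.
  { move=> q [/IH Hq E]; rewrite /colseq mem_undup mem_cat.
      move: Hq; rewrite /O => /orP[/orP[HqA|Hqr]|Hqc].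
      - by rewrite mem_filter HqA E eqxx.
      - by apply/orP; right; apply/mapP; exists q.2 => //; rewrite -E; case: q {E Hqr}.
      - by move: Hc; rewrite -E Hqc. }
  have [n2 [C2 L2]] := card_sub Hsub2.
  have R1 : n1 < a.
    case: (ltnP n1 a) => // H; exfalso; apply: (Hmax (true, p.2)) => /=; split=> //; split=> //; lia.
  have R2 : n2 < b.
    case: (ltnP n2 b) => // H; exfalso; apply: (Hmax (false, p.1)) => /=; split=> //; split=> //; lia.
  by exists n1, n2; split=> //; apply: Hrect.
pose M := sumn (map fst A) + sumn (map snd A) + sumn (rowsc ch) + sumn (colsc ch) + 1.
have [t Ht] := Hs (M, M).
move: (clos _ _ Ht); rewrite /O /= => /orP[/orP[HA|Hr]|Hc].
- have := in_sumn (map_f fst HA); rewrite /M /=; lia.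
- have := in_sumn Hr; rewrite /M; lia.
- have := in_sumn Hc; rewrite /M; lia.
Qed.

Lemma finite_span Z : downclosed Z -> finite_set Z -> exists s : seq pt, uniq s /\ spans Z (Defs.set_of s).
Proof.
move=> HZd [s Hs].
pose M := sumn (map fst s) + sumn (map snd s) + 1.
have HM : forall u v, Z (u, v) -> u < M /\ v < M.
  move=> u v /Hs H; have := in_sumn (map_f fst H); have := in_sumn (map_f snd H); rewrite /M /=; lia.
pose blk := [seq (i, j) | i <- iota 0 M, j <- iota 0 M].
have Hblk : forall u v, ((u, v) \in blk) = (u < M) && (v < M).
  move=> u v; apply/allpairsP/andP => [[[i j] [/= Hi Hj [-> ->]]]|[Hu Hv]].
    by rewrite !mem_iota /= in Hi Hj.
  by exists (u, v); rewrite !mem_iota /=.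
have Hublk : uniq blk by apply: allpairs_uniq; rewrite ?iota_uniq // => -[x1 y1] [x2 y2].
exists blk; split=> //.
have T1 : forall u j, j < M -> Titer Z 1 (Defs.set_of blk) (u, j).
  move=> u j Hj /=; case: (ltnP u M) => Hu.
    by left; rewrite /Defs.set_of Hblk Hu Hj.
  right; split; first by rewrite /Defs.set_of Hblk ltnNge Hu.
  move=> [n1 [n2 [HZ1 [C1 _]]]].
  have := @card_ge _ _ [seq (i, j) | i <- iota 0 M] C1.
  rewrite size_map size_iota; have := HM _ _ HZ1; move=> [H1 _] H; suff: M <= n1 by lia.
  apply: H; first by rewrite map_inj_uniq ?iota_uniq // => x y [].
  move=> p /mapP[i Hi ->]; split=> //; rewrite /Defs.set_of Hblk Hj andbT; by rewrite mem_iota in Hi.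
move=> [u v]; exists 2 => /=.
case: (classic (Titer Z 1 (Defs.set_of blk) (u, v))) => H1; first by left.
right; split=> // -[n1 [n2 [HZ1 [_ C2]]]].
have := @card_ge _ _ [seq (u, j) | j <- iota 0 M] C2.
rewrite size_map size_iota; have := HM _ _ HZ1; move=> [_ H2] H; suff: M <= n2 by lia.
apply: H; first by rewrite map_inj_uniq ?iota_uniq // => x y [].
move=> p /mapP[j Hj ->]; split=> //; apply: T1; by rewrite mem_iota in Hj.
Qed.

Theorem mainTheorem9 (Z : pset) (a b : nat) (Y : pset) :
  zero_set Z -> finite_set Z ->
  1 <= a -> 1 <= b -> included (rect a b) Z ->
  young Y -> (exists p, Y p) -> included Y (rect (a - 1) (b - 1)) ->
  exists k l, outer_boundary Y (k, l) /\
    k * b + l * a - k * l + gamma (shift_down Z l) + gamma (shift_left Z k)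
      <= 2 * gamma Z.
Proof.
move=> HZ HfZ Ha Hb Hrect HY Hne HYr.
have HZd := zero_down HZ.
have [s0 [Hu0 Hs0]] := finite_span HZd HfZ.
have [[A [HuA [HsA HspA]]] _] := gamma_spec Hu0 Hs0.
case: (classic (exists ch, valid A a b ch /\ outer_boundary Y (size (colsc ch), size (rowsc ch)))) => [[ch [Hv Hob]]|Hno]; last first.
  exfalso.
  have Hin := chains_in_Y HY Hne (fun ch Hv Hob => Hno (ex_intro _ ch (conj Hv Hob))).
  have [ch [Hv Hmax]] : exists ch, valid A a b ch /\ forall x, ~ valid A a b (x :: ch).
    apply: (@max_chain _ _ _ (a + b)) => ch Hv; have [/= H1 H2] := HYr _ (Hin _ Hv).
    rewrite size_ch; lia.
  exact: (not_span_maximal Hrect Hv Hmax HspA).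
exists (size (colsc ch)), (size (rowsc ch)); split=> //.
have [HuR HuC] := valid_uniq Hv.
have [B1 [HB1 [HsB1 HspB1]]] := delR HZd HuR HuA HspA.
have G1 := gamma_le HB1 HspB1.
have HuA' : uniq (map sw A) by rewrite map_inj_uniq //; exact: sw_inj.
have [B2 [HB2 [HsB2 HspB2]]] := delR (down_tr HZd) HuC HuA' (spans_sw HspA).
have HuB2' : uniq (map sw B2) by rewrite map_inj_uniq //; exact: sw_inj.
have G2 : gamma (shift_left Z (size (colsc ch))) <= size (map sw B2) := gamma_le HuB2' (spans_sw HspB2).
rewrite size_map HsB2 count_map in G2; rewrite HsB1 in G1.
have Hc := valid_count Hv.
have U := count_or (fun p : pt => p.2 \in rowsc ch) (fun p : pt => p.1 \in colsc ch) A.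
have U2 : count (fun p : pt => (p.1 \in colsc ch) && ~~ (p.2 \in rowsc ch)) A <= count (fun p : pt => p.1 \in colsc ch) A.
  by apply: sub_count => p /andP[].
have S1 := count_split (fun p : pt => p.2 \in rowsc ch) A.
have S2 := count_split (fun p : pt => p.1 \in colsc ch) A.
have E2 : count (preim sw (fun p : pt => p.2 \notin colsc ch)) A = count (fun x : pt => x.1 \notin colsc ch) A.
  by apply: eq_count.
rewrite E2 in G2; rewrite -HsA; lia.
Qed.
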